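(* Let $M$ be a $d$-dimensional simplicial complex and $N$ a $(d-1)$-dimensional induced subcomplex of $M$, and suppose both $M$ and $N$ are normal pseudomanifolds. Then (a) for any vertex $u$ of $N$ and any vertex $v$ of the simplicial complement $C(N, M)$, there is a path $P$ in the edge graph of $M$ joining $u$ to $v$ such that $u$ is the only vertex of $P$ lying in $N$; and (b) $C(N, M)$ has at most two connected components.
   Context: A simplicial complex is a finite set of finite sets closed under taking subsets; an element of size $i+1$ is an $i$-face (the empty set is the unique $(-1)$-face); $V(X)$ is the vertex set. For $A\subseteq V(M)$ the induced subcomplex $M[A]$ consists of all faces of $M$ contained in $A$; $N$ is an induced subcomplex if $N=M[V(N)]$. The simplicial complement of an induced subcomplex $N$ is $C(N,M)=M[V(M)\setminus V(N)]$. A pure $d$-dimensional complex has all maximal faces (facets) of dimension $d$. The link of a face $\alpha$ is $\mathrm{lk}_X(\alpha)=\{\beta\in X:\beta\cap\alpha=\emptyset,\ \alpha\cup\beta\in X\}$. A complex is connected if its edge graph is connected. A $d$-dimensional normal pseudomanifold ($d\ge1$) is a pure $d$-dimensional simplicial complex in which every $(d-1)$-face lies in exactly two facets and the link of every face of dimension $\le d-2$ (including the empty face, whose link is the whole complex) is connected. *)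

(* Defs.v *)
From mathcomp Require Import all_boot.
Set Implicit Arguments. Unset Strict Implicit. Unset Printing Implicit Defensive.

Section Complexes.
Variable T : finType.
Implicit Types (X : {set {set T}}) (A s t a : {set T}).

Definition simplicial_complex X : Prop :=
  forall s t, s \in X -> t \subset s -> t \in X.

Definition vertices X : {set T} := \bigcup_(s in X) s.

Definition induced X A : {set {set T}} := [set s in X | s \subset A].

Definition is_induced_subcomplex (N M : {set {set T}}) : Prop :=
  N \subset M /\ N = induced M (vertices N).

Definition scomplement (N M : {set {set T}}) : {set {set T}} :=
  induced M (vertices M :\: vertices N).

(* an i-face has i+1 elements; dimension d (as a nat, d >= 0):
   there is a face with d+1 elements and every face has at most d+1 *)
Definition has_dim X (d : nat) : Prop :=
  (exists2 s, s \in X & #|s| = d.+1) /\ (forall s, s \in X -> #|s| <= d.+1).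

Definition facet X s : bool :=
  (s \in X) && [forall t in X, (s \subset t) ==> (t == s)].

Definition pure_dim X (d : nat) : Prop :=
  has_dim X d /\ (forall s, facet X s -> #|s| = d.+1).

Definition link X a : {set {set T}} :=
  [set b in X | [disjoint b & a] && (a :|: b \in X)].

Definition edge_rel X : rel T := fun x y => (x != y) && ([set x; y] \in X).

Definition sconnected X : Prop :=
  forall u v, u \in vertices X -> v \in vertices X -> connect (edge_rel X) u v.

Definition component X x : {set T} :=
  [set y in vertices X | connect (edge_rel X) x y].

Definition num_components X : nat :=
  #|[set component X x | x in vertices X]|.

Definition normal_pseudomanifold X (d : nat) : Prop :=
  [/\ 1 <= d, pure_dim X d,
      (forall f, f \in X -> #|f| = d ->
          #|[set s | facet X s & f \subset s]| = 2)
    & (forall a, a \in X -> #|a| <= d.-1 -> sconnected (link X a))].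

End Complexes.

(* Main.v *)
Require Import Defs.
From mathcomp Require Import all_boot zify.

Lemma connect_closed {T : finType} (e : rel T) (P : T -> Prop) u v :
  (forall z w, P z -> e z w -> P w) -> connect e u v -> P u -> P v.
Proof.
move=> H /connectP [p pth ->]. elim: p u pth => [|w p IH] u //= /andP [euw pth] Pu.
exact: IH pth (H _ _ Pu euw).
Qed.

Lemma face_in_facet {T : finType} {X : {set {set T}}} {s} :
  s \in X -> exists2 F, facet X F & s \subset F.
Proof.
move=> sX.
case: (@arg_maxnP _ s (fun t => (t \in X) && (s \subset t)) (fun t => #|t|)).
  by rewrite sX subxx.
move=> F /andP [FX sF] Fmax.
exists F => //. apply/andP; split => //. apply/forall_inP => t tX; apply/implyP => Ft.
rewrite eq_sym eqEcard Ft /=. apply: Fmax. by rewrite tX (subset_trans sF Ft).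
Qed.

Lemma facetX {T : finType} {X : {set {set T}}} {s} : facet X s -> s \in X.
Proof. by case/andP. Qed.

Lemma card_facet {T : finType} {X : {set {set T}}} {d s} :
  has_dim X d -> s \in X -> #|s| = d.+1 -> facet X s.
Proof.
move=> [_ hd] sX cs; apply/andP; split => //. apply/forall_inP => t tX; apply/implyP => st.
rewrite eq_sym eqEcard st /= cs. exact: hd.
Qed.

Lemma add1 {T : finType} {s f : {set T}} :
  f \subset s -> #|s| = #|f|.+1 -> exists2 c, c \notin f & s = c |: f.
Proof.
move=> fs cs.
have : #|s :\: f| == 1 by rewrite cardsD (setIidPr fs) cs subSnn.
case/cards1P => c E.
have cf : c \in s :\: f by rewrite E set11.
exists c; first by move: cf; rewrite inE => /andP [].
apply/setP => z; rewrite !inE.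
move/setP/(_ z): E; rewrite !inE /=.
case: (boolP (z \in f)) => zf /=.
- by rewrite orbT (subsetP fs z zf).
- by rewrite orbF => ->.
Qed.

Lemma SC {T : finType} (X : {set {set T}}) d (Q : {set T} -> Prop) :
  simplicial_complex X -> pure_dim X d ->
  (forall a, a \in X -> #|a| <= d.-1 -> sconnected (link X a)) ->
  (forall F G, facet X F -> facet X G -> d <= #|F :&: G| -> Q F -> Q G) ->
  forall a F G, a \in X -> facet X F -> facet X G -> a \subset F -> a \subset G ->
  Q F -> Q G.
Proof.
move=> scX [hd pure] lkc pres a F G.
move: {2}(d.+1 - #|a|) (leqnn (d.+1 - #|a|)) => n.
elim: n a F G => [|n IH] a F G hn aX fF fG aF aG QF.
  apply: (pres F G fF fG _ QF). have : a \subset F :&: G by rewrite subsetI aF aG.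
  move/subset_leq_card; lia.
case: (leqP d #|a|) => ad.
  apply: (pres F G fF fG _ QF). have : a \subset F :&: G by rewrite subsetI aF aG.
  move/subset_leq_card; lia.
have lk := lkc a aX (ltac:(lia) : #|a| <= d.-1).
have cF := pure F fF; have cG := pure G fG.
have [f fFa] : exists f, f \in F :\: a.
  apply/set0Pn; apply: contraTneq isT => E.
  have : F \subset a by rewrite -setD_eq0 E.
  move/subset_leq_card; lia.
have [g gGa] : exists g, g \in G :\: a.
  apply/set0Pn; apply: contraTneq isT => E.
  have : G \subset a by rewrite -setD_eq0 E.
  move/subset_leq_card; lia.
have key : forall c H H', c \notin a -> facet X H -> facet X H' -> c |: a \subset H ->
    c |: a \subset H' -> Q H -> Q H'.
  move=> c H H' ca fH fH' cH cH' QH.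
  have cX : c |: a \in X := scX H _ (facetX fH) cH.
  apply: (IH (c |: a) H H' _ cX fH fH' cH cH' QH).
  by rewrite cardsU1 ca; clear -hn ad; lia.
have vert : forall c H, facet X H -> a \subset H -> c \in H :\: a -> c \in vertices (link X a).
  move=> c H fH aH; rewrite inE => /andP [ca cH].
  apply/bigcupP; exists [set c]; last by rewrite set11.
  rewrite inE disjoints1 ca /=; apply/andP; split.
    by apply: (scX H) (facetX fH) _; rewrite sub1set.
  apply: (scX H) (facetX fH) _. by rewrite subUset aH sub1set cH.
have cfg := lk f g (vert f F fF aF fFa) (vert g G fG aG gGa).
pose P c := c \notin a /\ exists2 H, facet X H & (c |: a \subset H) /\ Q H.
have : P g.
  apply: (@connect_closed _ _ P _ _ _ cfg).
    move=> z w [za [H fH [zaH QH]]]; case/andP => zw; rewrite inE => /and3P [zwX dis aUX].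
    have [H' fH' sH'] := face_in_facet aUX.
    have wa : w \notin a.
      by apply/negbT; apply: (disjointFr dis); rewrite !inE eqxx orbT.
    split => //; exists H' => //; split.
      apply: subset_trans sH'. by rewrite subUset sub1set !inE eqxx ?orbT /= subsetUl.
    apply: (key z H H') => //.
    apply: subset_trans sH'. by rewrite subUset sub1set !inE eqxx ?orbT /= subsetUl.
  move: fFa; rewrite inE => /andP [fa fF'].
  split => //; exists F => //; split => //.
  by rewrite subUset sub1set fF' aF.
case=> ga [H fH [gaH QH]].
apply: (key g H G ga fH fG gaH _ QH).
move: gGa; rewrite inE => /andP [_ gG].
by rewrite subUset sub1set gG aG.
Qed.
Lemma parity {T : finType} {e : rel T} {V : {set T}} {a b p q} :
  symmetric e -> irreflexive e ->
  (forall c c', c \in V -> e c c' -> c' \in V) ->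
  (forall c, c \in V -> #|[set c' | e c c']| = 2) ->
  (forall u v, u \in V -> v \in V -> connect e u v) ->
  a \in V -> b \in V -> a != b -> ~~ e a b ->
  [set c' | e b c'] = [set p; q] ->
  exists2 x, e a x &
    connect (fun u w => [&& e u w, u \notin [set a; b] & w \notin [set a; b]]) p x.
Proof.
move=> esym eirr eV deg conn aV bV anb nab Nb.
set e' := fun u w => [&& e u w, u \notin [set a; b] & w \notin [set a; b]].
have pNb : e b p.
  have : p \in [set c' | e b c'] by rewrite Nb !inE eqxx.
  by rewrite inE.
have pV := eV b p bV pNb.
have pab : p \notin [set a; b].
  rewrite !inE; apply/norP; split.
    by apply: contraNneq nab => pa; rewrite -pa esym.
  by apply: contraTneq pNb => ->; rewrite eirr.
set D := [set w | connect e' p w].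
have pD : p \in D by rewrite inE connect0.
case: (boolP [exists x in D, e a x]).
  by case/exists_inP => x; rewrite inE => px ax; exists x.
move/exists_inPn => nD.
have Dprop : forall w, w \in D -> w \in V /\ w \notin [set a; b].
  move=> w; rewrite inE => pw.
  apply: (@connect_closed _ _ (fun w => w \in V /\ w \notin [set a; b]) _ _ _ pw (conj pV pab)).
  move=> z w' [zV _] /and3P [ezw _ wab]. split => //. exact: eV ezw.
have De' : forall z w, z \in D -> e z w -> w \notin [set a; b] -> w \in D.
  move=> z w zD ezw wab. move: (zD); rewrite !inE => pz.
  apply: connect_trans pz (connect1 _). by rewrite /e' ezw wab (Dprop z zD).2.
have eDout : forall z w, z \in D -> e z w -> w \notin D -> w = b.
  move=> z w zD ezw wD. case: (boolP (w \in [set a; b])); last first.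
    by move=> wab; rewrite (De' z w zD ezw wab) in wD.
  rewrite !inE => /orP [/eqP wa|/eqP //].
  by move: (nD z zD); rewrite -wa esym ezw.
have bD : b \notin D.
  by apply/negP => /Dprop [_]; rewrite !inE eqxx orbT.
case: (boolP (q \in D)) => qD.
  exfalso.
  have : a \in b |: D.
    apply: (@connect_closed _ _ (fun w => w \in b |: D) _ _ _ (conn b a bV aV)); last by rewrite !inE eqxx.
    move=> z w; rewrite in_setU1 => /orP [/eqP -> | zD] ezw; rewrite in_setU1.
      have : w \in [set c' | e b c'] by rewrite inE.
      by rewrite Nb => /set2P [->|->]; rewrite ?pD ?qD ?orbT.
    case: (boolP (w \in D)) => wD; first by apply/orP; right.
    by rewrite (eDout z w zD ezw wD) eqxx.
  rewrite in_setU1 => /orP [/eqP ab|aD]; first by rewrite ab eqxx in anb.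
  by case: (Dprop a aD); rewrite !inE eqxx.
have sumdeg : \sum_(v in D) \sum_w (e v w : nat) = 2 * #|D|.
  rewrite -sum1_card big_distrr /=. apply: eq_bigr => v vD. rewrite muln1.
  rewrite -(deg v (Dprop v vD).1) -sum1_card [RHS]big_mkcond /=.
  by apply: eq_bigr => w _; rewrite inE; case: (e v w).
have spl : forall v, v \in D -> \sum_w (e v w : nat) = \sum_(w in D) (e v w : nat) + (v == p).
  move=> v vD. rewrite (bigID (fun w => w \in D)) /=. congr (_ + _).
  rewrite (bigD1 b) //= big1 ?addn0.
    have := Nb; move/setP/(_ v); rewrite !inE esym => ->.
    case: (v =P q) => [vq|_]; last by rewrite orbF.
    by rewrite vq (negbTE qD) in vD.
  move=> w /andP [wD wb]. case ew: (e v w) => //.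
  by rewrite (eDout v w vD ew wD) eqxx in wb.
have sp1 : \sum_(v in D) ((v == p) : nat) = 1.
  rewrite (bigD1 p) //= eqxx big1 // => v /andP [_ /negbTE ->] //.
have hsplit : forall v w, (e v w : nat) = (e v w && (enum_rank v < enum_rank w)) + (e w v && (enum_rank w < enum_rank v)).
  move=> v w. rewrite (esym w v). case evw: (e v w) => //=.
  case: (ltngtP (enum_rank v) (enum_rank w)) => // h; have vw := enum_rank_inj (val_inj h).
  by rewrite vw eirr in evw.
have even : \sum_(v in D) \sum_(w in D) (e v w : nat) =
   \sum_(v in D) \sum_(w in D) ((e v w && (enum_rank v < enum_rank w)) : nat) +
   \sum_(v in D) \sum_(w in D) ((e w v && (enum_rank w < enum_rank v)) : nat).
  rewrite -big_split; apply: eq_bigr => v _; rewrite -big_split; apply: eq_bigr => w _.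
  exact: hsplit.
rewrite [X in _ + X]exchange_big /= in even.
have : \sum_(v in D) \sum_w (e v w : nat) =
   \sum_(v in D) \sum_(w in D) (e v w : nat) + \sum_(v in D) ((v == p) : nat).
  by rewrite -big_split; apply: eq_bigr => v vD; exact: spl.
lia.
Qed.
Definition Apex {T : finType} (M : {set {set T}}) (s : {set T}) :=
  [set x | (x \notin s) && (x |: s \in M)].
Definition Sof {T : finType} (M N : {set {set T}}) (s : {set T}) :=
  [set z | [exists x in Apex M s, connect (edge_rel (scomplement N M)) x z]].

Lemma vertsP {T : finType} {X : {set {set T}}} {w : T} :
  reflect (exists2 s, s \in X & w \in s) (w \in vertices X).
Proof. exact: bigcupP. Qed.

Lemma sub_verts {T : finType} {X : {set {set T}}} {s} : s \in X -> s \subset vertices X.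
Proof. by move=> sX; apply: (bigcup_sup s sX). Qed.

Lemma ind_mem {T : finType} {M N : {set {set T}}} {s} :
  is_induced_subcomplex N M -> s \in M -> s \subset vertices N -> s \in N.
Proof. by case=> _ E sM sV; rewrite E inE sM sV. Qed.

Lemma N_M {T : finType} {M N : {set {set T}}} {s} :
  is_induced_subcomplex N M -> s \in N -> s \in M.
Proof. by case=> sub _ sN; apply: (subsetP sub). Qed.

Lemma scN {T : finType} {M N : {set {set T}}} :
  simplicial_complex M -> is_induced_subcomplex N M -> simplicial_complex N.
Proof.
move=> scM hN s t sN ts; apply: (ind_mem hN).
  exact: scM s t (N_M hN sN) ts.
exact: subset_trans ts (sub_verts sN).
Qed.

Lemma C_face {T : finType} {M N : {set {set T}}} {s} :
  s \in scomplement N M -> s \in M /\ s \subset vertices M :\: vertices N.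
Proof. by rewrite inE => /andP []. Qed.

Lemma eC_notN {T : finType} {M N : {set {set T}}} {y w} :
  edge_rel (scomplement N M) y w -> w \notin vertices N.
Proof.
case/andP => _ /C_face [_ /subsetP /(_ w)]; rewrite !inE eqxx orbT => /(_ isT).
by case/andP.
Qed.

Lemma eC_M {T : finType} {M N : {set {set T}}} {y w} :
  edge_rel (scomplement N M) y w -> edge_rel M y w.
Proof. by case/andP => yw /C_face [yM _]; rewrite /edge_rel yw yM. Qed.

Lemma edge_sym {T : finType} (X : {set {set T}}) : symmetric (edge_rel X).
Proof. by move=> x y; rewrite /edge_rel eq_sym setUC. Qed.

Lemma path_notN {T : finType} {M N : {set {set T}}} x p :
  path (edge_rel (scomplement N M)) x p -> all (fun w => w \notin vertices N) p.
Proof.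
elim: p x => [|w p IH] x //= /andP [exw pth].
by rewrite (eC_notN exw) (IH w pth).
Qed.

Lemma S_closed {T : finType} (M N : {set {set T}}) s z w :
  z \in Sof M N s -> connect (edge_rel (scomplement N M)) z w -> w \in Sof M N s.
Proof.
rewrite !inE => /exists_inP [x xA xz] zw.
by apply/exists_inP; exists x => //; apply: connect_trans xz zw.
Qed.

Lemma half {T : finType} (M N : {set {set T}}) d (r : {set T}) a b :
  simplicial_complex M -> has_dim M d -> is_induced_subcomplex N M -> has_dim N d.-1 ->
  normal_pseudomanifold M d -> normal_pseudomanifold N d.-1 ->
  r \in N -> #|r| = d.-1 -> a \notin r -> b \notin r -> a != b ->
  a |: r \in N -> b |: r \in N ->
  Sof M N (b |: r) \subset Sof M N (a |: r).
Proof.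
move=> scM hdM hN hdN [d1 [_ pM] cM lkM] [d1' pN cN lkN] rN cr ar br ab aN bN.
set e := fun c c' => [&& c != c', c \notin r, c' \notin r & c' |: (c |: r) \in M].
set V := [set c | (c \notin r) && (c |: r \in M)].
have esy : symmetric e.
  move=> c c'; rewrite /e eq_sym setUCA.
  by case: (c \notin r); case: (c' \notin r); rewrite ?andbF.
have eirr : irreflexive e by move=> c; rewrite /e eqxx.
have eV : forall c c', c \in V -> e c c' -> c' \in V.
  move=> c c' _ /and4P [_ _ c'r H]; rewrite inE c'r /=; apply: (scM _ _ H).
  by rewrite setUCA subsetUr.
have card_cr : forall c, c \notin r -> #|c |: r| = d.
  by move=> c cr'; rewrite cardsU1 cr' cr; clear -d1'; lia.
have deg : forall c, c \in V -> #|[set c' | e c c']| = 2.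
  move=> c; rewrite inE => /andP [cr' cM'].
  rewrite -(cM (c |: r) cM' (card_cr c cr')).
  have inj : {in [set c' | e c c'] &, injective (fun c' => c' |: (c |: r))}.
    move=> x y; rewrite !inE => /and4P [xc _ xr _] /and4P [yc _ yr _] E.
    have : x \in y |: (c |: r) by rewrite -E setU11.
    rewrite !inE (negbTE xr) orbF => /orP [/eqP // | /eqP xc'].
    by rewrite xc' eqxx in xc.
  rewrite -(card_in_imset inj). apply: eq_card => s; rewrite [in RHS]inE.
  apply/imsetP/andP.
    case=> c'; rewrite inE => /and4P [cc' _ c'r H] ->. split; last by rewrite subsetUr.
    apply: (card_facet hdM H).
    have c'n : c' \notin c |: r by rewrite !inE negb_or eq_sym cc' c'r.
    by rewrite cardsU1 c'n card_cr.
  case=> fs sub.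
  have [c' c'n sE] := add1 sub (etrans (pM s fs) (congr1 S (esym (card_cr c cr')))).
  rewrite sE in fs *.
  exists c'; last by [].
  move: c'n; rewrite !inE negb_or => /andP [c'c c'r].
  by rewrite /e eq_sym c'c cr' c'r (facetX fs).
have conn : forall u v, u \in V -> v \in V -> connect e u v.
  have lk := lkM r (N_M hN rN) (eq_leq cr).
  move=> u v uV vV.
  have vl : forall w, w \in V -> w \in vertices (link M r).
    move=> w; rewrite inE => /andP [wr wM]. apply/vertsP; exists [set w]; last by rewrite set11.
    rewrite inE disjoints1 wr /=. apply/andP; split.
      by apply: (scM _ _ wM); rewrite sub1set setU11.
    by rewrite setUC.
  apply: (connect_sub _ (lk u v (vl u uV) (vl v vV))).
  move=> x y /andP [xy]; rewrite inE => /and3P [_ dis H]. apply: connect1.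
  have xr : x \notin r by apply/negbT; apply: (disjointFr dis); rewrite !inE eqxx.
  have yr : y \notin r by apply/negbT; apply: (disjointFr dis); rewrite !inE eqxx ?orbT.
  rewrite /e xy xr yr /=.
  have -> : y |: (x |: r) = r :|: [set x; y].
    by apply/setP => z; rewrite !inE; case: (z == x); case: (z == y); case: (z \in r).
  exact: H.
have aV : a \in V by rewrite inE ar (N_M hN aN).
have bV : b \in V by rewrite inE br (N_M hN bN).
have dd : d = d.-1.+1 by clear -d1'; lia.
have nab : ~~ e a b.
  apply/negP => /and4P [_ _ _ H].
  have : b |: (a |: r) \in N.
    apply: (ind_mem hN H). rewrite subUset sub1set (subsetP (sub_verts bN)) ?setU11 //.
    exact: sub_verts aN.
  move/(proj2 hdN).
  have bn : b \notin a |: r by rewrite !inE negb_or eq_sym ab br.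
  rewrite cardsU1 bn card_cr //; clear -d1'; lia.
have VN : forall u, u \in V -> u \notin [set a; b] -> u \notin vertices N.
  move=> u; rewrite inE => /andP [ur uM] uab. apply/negP => uN.
  have uNf : u |: r \in N.
    apply: (ind_mem hN uM). by rewrite subUset sub1set uN (sub_verts rN).
  have fac : forall c, c \notin r -> c |: r \in N -> facet N (c |: r).
    by move=> c cr' cN'; apply: (card_facet hdN cN'); rewrite card_cr // -dd.
  have E : [set s | facet N s & r \subset s] = [set a |: r; b |: r].
    apply/eqP; rewrite eq_sym eqEcard (cN r rN cr) cards2.
    have ne : a |: r != b |: r.
      apply/negP => /eqP E. have : a \in b |: r by rewrite -E setU11.
      by rewrite !inE (negbTE ar) orbF (negbTE ab).
    by rewrite ne andbT subUset !sub1set !inE !fac // !subsetUr /=.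
  have : u |: r \in [set s | facet N s & r \subset s] by rewrite inE fac // subsetUr.
  rewrite E => /set2P [] E'.
    have : u \in a |: r by rewrite -E' setU11.
    rewrite !inE (negbTE ur) orbF => /eqP ua.
    by rewrite ua !inE eqxx in uab.
  have : u \in b |: r by rewrite -E' setU11.
  rewrite !inE (negbTE ur) orbF => /eqP ua.
  by rewrite ua !inE eqxx orbT in uab.
set e' := fun u w => [&& e u w, u \notin [set a; b] & w \notin [set a; b]].
have e'C : forall u w, e' u w -> edge_rel (scomplement N M) u w.
  move=> u w /and3P [euw ua wa].
  have uV : u \in V.
    move: (euw) => /and4P [_ ur _ H]. rewrite inE ur /=. apply: (scM _ _ H).
    exact: subsetUr.
  have wV := eV u w uV euw.
  move: (euw) => /and4P [uw _ _ H]. rewrite /edge_rel uw /= inE.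
  have uwM : [set u; w] \in M.
    by apply: (scM _ _ H); rewrite subUset !sub1set !inE !eqxx ?orbT.
  rewrite uwM /=. apply/subsetP => z zuw. rewrite inE (subsetP (sub_verts uwM) z zuw) andbT.
  by move: zuw => /set2P [->|->]; [exact: VN uV ua | exact: VN wV wa].
have e'sym : symmetric e'.
  by move=> u w; rewrite /e' esy; case: (e w u); case: (u \in _); case: (w \in _).
apply/subsetP => z; rewrite !inE => /exists_inP [x' x'A x'z].
have ebx : e b x'.
  move: x'A; rewrite inE => /andP []; rewrite !inE negb_or => /andP [x'b x'r] H.
  by rewrite /e eq_sym x'b br x'r H.
have : #|[set c' | e b c']| == 2 by rewrite deg.
case/cards2P => p [q [pq Nb]].
have : x' \in [set p; q] by rewrite -Nb inE.
have Nb' : [set c' | e b c'] = [set q; p] by rewrite Nb setUC.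
have fin : forall p0, (exists2 x, e a x & connect e' p0 x) -> x' = p0 ->
    [exists x in Apex M (a |: r), connect (edge_rel (scomplement N M)) x z].
  move=> p0 [x ax px] x'p. apply/exists_inP; exists x.
    move: ax => /and4P [xa _ xr H]. by rewrite inE !inE negb_or eq_sym xa xr H.
  apply: connect_trans x'z. rewrite x'p.
  rewrite (sym_connect_sym (edge_sym _)). apply: (connect_sub _ px) => u w h; exact: connect1 (e'C u w h).
case/set2P => x'p.
  by apply: (fin p) x'p; apply: (parity esy eirr eV deg conn aV bV ab nab Nb).
by apply: (fin q) x'p; apply: (parity esy eirr eV deg conn aV bV ab nab Nb').
Qed.

Lemma apex_inj {T : finType} (M : {set {set T}}) s : {in Apex M s &, injective (fun x => x |: s)}.
Proof.
move=> x y; rewrite !inE => /andP [xs _] /andP [ys _] E.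
have : x \in y |: s by rewrite -E setU11.
by rewrite !inE (negbTE xs) orbF => /eqP.
Qed.

Theorem lemma3p3 (T : finType) (M N : {set {set T}}) (d : nat) :
  simplicial_complex M -> has_dim M d ->
  is_induced_subcomplex N M -> has_dim N d.-1 ->
  normal_pseudomanifold M d -> normal_pseudomanifold N d.-1 ->
  (forall u v, u \in vertices N -> v \in vertices (scomplement N M) ->
     exists p : seq T,
       [/\ path (edge_rel M) u p, last u p = v
         & all (fun w => w \notin vertices N) p])
  /\ num_components (scomplement N M) <= 2.
Proof.
move=> scM hdM hN hdN npM npN.
have npM' := npM; have npN' := npN.
case: npM => [d1 [_ pM] cM lkM]; case: npN => [d1' [hdN' pN] cN lkN].
have dd : d = d.-1.+1 by clear -d1'; lia.
have scN' := scN scM hN.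
have [s0 s0N _] := proj1 hdN.
have [s1 f0 _] := face_in_facet s0N.
have cs : forall s, facet N s -> #|s| = d by move=> s fs; rewrite (pN s fs) -dd.
have s1N := facetX f0.
set S0 := Sof M N s1.
have apex_notN : forall s x, s \in N -> #|s| = d -> x \in Apex M s -> x \notin vertices N.
  move=> s x sN cs'; rewrite inE => /andP [xs xM]; apply/negP => xN.
  have : x |: s \in N by apply: (ind_mem hN xM); rewrite subUset sub1set xN (sub_verts sN).
  move/(proj2 hdN); rewrite cardsU1 xs cs'; clear -d1'; lia.
have Nprop : forall s, facet N s -> Sof M N s = S0.
  move=> s fs.
  have e0 : set0 \in N by apply: (scN' _ _ s1N); rewrite sub0set.
  apply: (SC N d.-1 (fun s => Sof M N s = S0) scN' (conj hdN' pN) lkN _ set0 s1 s e0 f0 fs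
            (sub0set _) (sub0set _) erefl).
  move=> F G fF fG cFG <-.
  case: (eqVneq F G) => [-> //|FG].
  have cF := cs F fF; have cG := cs G fG.
  have cI : #|F :&: G| = d.-1.
    have : #|F :&: G| <= #|F| by apply: subset_leq_card; apply: subsetIl.
    rewrite leq_eqVlt => /orP [/eqP E|]; last by rewrite cF => h; clear -h cFG d1'; lia.
    exfalso; move: FG => /eqP; apply.
    have E1 : F :&: G = F by apply/eqP; rewrite eqEcard subsetIl E leqnn.
    have E2 : F :&: G = G by apply/eqP; rewrite eqEcard subsetIr E cF -cG leqnn.
    by rewrite -E1 E2.
  have rN : F :&: G \in N by apply: (scN' _ _ (facetX fF)); apply: subsetIl.
  have [a ar FE] := add1 (subsetIl F G) (etrans cF (etrans dd (congr1 S (esym cI)))).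
  have [b br GE] := add1 (subsetIr F G) (etrans cG (etrans dd (congr1 S (esym cI)))).
  move: rN cI ar br FE GE.
  set r := F :&: G => rN cI ar br FE GE.
  have ab : a != b.
    apply: contraNneq FG => ab. apply/eqP. by rewrite FE GE ab.
  have aN : a |: r \in N by rewrite -FE (facetX fF).
  have bN : b |: r \in N by rewrite -GE (facetX fG).
  apply/eqP; rewrite eqEsubset FE GE.
  rewrite (half M N d r a b scM hdM hN hdN npM' npN' rN cI ar br ab aN bN).
  by rewrite (half M N d r b a scM hdM hN hdN npM' npN' rN cI br ar
    (ltac:(by rewrite eq_sym)) bN aN).
have cs1 := cs s1 f0.
pose Q (F : {set T}) := forall w, w \in F -> w \notin vertices N -> w \in S0.
have e0 : set0 \in M by apply: (scM _ _ (N_M hN s1N)); rewrite sub0set.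
have Mall : forall F, facet M F -> Q F.
  have [F0 fF0 sF0] := face_in_facet (N_M hN s1N).
  have [x0 x0n F0E] := add1 sF0 (etrans (pM F0 fF0) (congr1 S (esym cs1))).
  have QF0 : Q F0.
    move=> w; rewrite F0E in_setU1 => /orP [/eqP -> _ | ws wN].
      rewrite inE; apply/exists_inP; exists x0 => //.
      by rewrite inE x0n -F0E (facetX fF0).
    by rewrite (subsetP (sub_verts s1N) w ws) in wN.
  move=> F fF.
  apply: (SC M d Q scM (conj hdM pM) lkM _ set0 F0 F e0 fF0 fF (sub0set _) (sub0set _) QF0).
  move=> F1 G fF1 fG cFG QF1 w wG wN.
  case: (boolP (F1 :&: G \subset vertices N)) => sub.
    have tN : F1 :&: G \in N.
      apply: (ind_mem hN (scM _ _ (facetX fF1) (subsetIl _ _)) sub).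
    have ct : #|F1 :&: G| = d.
      have := proj2 hdN _ tN; clear -cFG d1'; lia.
    have ft : facet N (F1 :&: G) by apply: (card_facet hdN tN); rewrite ct -dd.
    have [x xn GE] := add1 (subsetIr F1 G) (etrans (pM G fG) (congr1 S (esym ct))).
    have wx : w = x.
      move: wG; rewrite GE in_setU1 => /orP [/eqP //| wt].
      by rewrite (subsetP sub w wt) in wN.
    rewrite -(Nprop _ ft) inE; apply/exists_inP; exists x.
      by rewrite inE xn -GE (facetX fG).
    by rewrite wx connect0.
  case/subsetPn: sub => t tI tN.
  move: (tI); rewrite inE => /andP [tF1 tG].
  apply: (S_closed _ _ _ t); first exact: QF1 t tF1 tN.
  case: (eqVneq t w) => [->|tw]; first exact: connect0.
  apply: connect1. rewrite /edge_rel tw /= inE.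
  have twM : [set t; w] \in M.
    by apply: (scM _ _ (facetX fG)); rewrite subUset !sub1set tG wG.
  rewrite twM /=. apply/subsetP => z zz. rewrite inE (subsetP (sub_verts twM) z zz) andbT.
  by move: zz => /set2P [->|->].
have inS0 : forall v, v \in vertices (scomplement N M) -> v \in S0.
  move=> v; case/vertsP => t tC vt. have [tM tsub] := C_face tC.
  have vN : v \notin vertices N.
    by move: (subsetP tsub v vt); rewrite inE => /andP [].
  have [F fF tF] := face_in_facet tM.
  exact: Mall F fF v (subsetP tF v vt) vN.
split.
  move=> u v uN vC.
  case/vertsP: uN => s sN us. have [sg fsg ssg] := face_in_facet sN.
  have := inS0 v vC. rewrite -(Nprop sg fsg) inE => /exists_inP [x xA xv].
  case/connectP: xv => p pth vE.
  exists (x :: p); split.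
  - rewrite /= (sub_path (fun y w h => eC_M h) pth) andbT.
    move: (xA); rewrite inE => /andP [xsg xM].
    have usg : u \in sg := subsetP ssg u us.
    rewrite /edge_rel; apply/andP; split.
      by apply: contraNneq xsg => <-.
    by apply: (scM _ _ xM); rewrite subUset !sub1set !inE eqxx usg orbT.
  - by rewrite /= vE.
  - by rewrite /= (apex_notN sg x (facetX fsg) (cs sg fsg) xA) (path_notN x p pth).
rewrite /num_components.
have symC := sym_connect_sym (edge_sym (scomplement N M)).
apply: (@leq_trans #|[set component (scomplement N M) x | x in Apex M s1]|).
  apply: subset_leq_card; apply/subsetP => K /imsetP [v vC ->].
  have := inS0 v vC. rewrite inE => /exists_inP [x xA xv].
  apply/imsetP; exists x => //.
  apply/setP => z; rewrite !inE; congr (_ && _); apply/idP/idP => h.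
    exact: connect_trans xv h.
  by rewrite symC in xv; apply: connect_trans xv h.
apply: leq_trans (leq_imset_card _ _) _.
rewrite -(cM s1 (N_M hN s1N) cs1) -(card_in_imset (apex_inj M s1)).
apply: subset_leq_card; apply/subsetP => s /imsetP [x xA ->].
have := xA; rewrite /Apex inE => /andP [xs xM].
rewrite inE subsetUr andbT.
by apply: (card_facet hdM xM); rewrite cardsU1 xs cs1.
Qed.
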